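(* Let $\mathcal F$ be a family of graphs, every member of which is connected, and let $v$ be the smallest number of vertices of a member of $\mathcal F$. Then for every positive integer $n$ and every nonnegative integer $k$, $$\left(1-\frac{2kv}{n}\right)\mathrm{ex}(n,\mathcal F)\le \mathrm{exa}_k(n,\mathcal F)\le \mathrm{ex}(n,\mathcal F)+k=\mathrm{exa}_0(n,\mathcal F)+k.$$
   Context: For graphs $H$ and $F$, $\mathcal N(H,F)$ is the number of subgraphs of $H$ isomorphic to $F$. For a family $\mathcal F$ of graphs and a nonnegative integer $k$, $\mathrm{exa}_k(n,\mathcal F)$ is the largest number of edges of a simple graph $H$ on $n$ vertices with $\sum_{F\in\mathcal F}\mathcal N(H,F)=k$ (defined whenever such an $H$ exists). $\mathrm{ex}(n,\mathcal F)=\mathrm{exa}_0(n,\mathcal F)$ is the largest number of edges of a graph on $n$ vertices containing no subgraph isomorphic to a member of $\mathcal F$. *)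

(* Defs.v *)
From mathcomp Require Import all_boot all_order all_algebra.
Set Implicit Arguments. Unset Strict Implicit. Unset Printing Implicit Defensive.

(* A (simple) graph on the vertex set 'I_m = {0,...,m-1}: its edge set,
   a set of 2-element subsets of 'I_m. *)
Definition graph (m : nat) := {set {set 'I_m}}.

Definition simple_graph m (G : graph m) : bool := [forall e in G, #|e| == 2].

Definition adj m (G : graph m) : rel 'I_m := fun x y => [set x; y] \in G.

Definition connected m (G : graph m) : bool :=
  (0 < m) && [forall x, forall y, connect (adj G) x y].

(* A subgraph of H: a pair (vertex set S, edge set E) with E a subset of the
   edges of H and every edge of E contained in S. *)
Definition is_subgraph n (H : graph n) (p : {set 'I_n} * graph n) : bool :=
  (p.2 \subset H) && [forall e in p.2, e \subset p.1].

Definition iso_to n m (p : {set 'I_n} * graph n) (G : graph m) : bool :=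
  [exists f : {ffun 'I_m -> 'I_n},
     [&& injectiveb f, f @: setT == p.1 & p.2 == [set f @: e | e : {set 'I_m} in G]]].

Definition graph_family := forall m : nat, pred (graph m).

(* \sum_{F in Fam} N(H,F): the number of subgraphs of H isomorphic to a member
   of Fam.  A member on m vertices can only embed if m <= n, so it suffices
   to range over m < n.+1. *)
Definition count n (Fam : graph_family) (H : graph n) : nat :=
  #|[set p : {set 'I_n} * graph n | is_subgraph H p &&
       [exists m : 'I_n.+1, exists G : graph m, Fam m G && iso_to p G]]|.

Definition is_exa (n : nat) (Fam : graph_family) (k e : nat) : Prop :=
  (exists2 H : graph n, simple_graph H & count Fam H = k /\ #|H| = e) /\
  (forall H : graph n, simple_graph H -> count Fam H = k -> #|H| <= e).

Definition is_ex (n : nat) (Fam : graph_family) (e : nat) : Prop := is_exa n Fam 0 e.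

(* Main.v *)
Require Import Defs.
From mathcomp Require Import all_boot all_order all_algebra.
From mathcomp Require Import zify ring lra.
Import Order.TTheory GRing.Theory Num.Theory.
Set Implicit Arguments. Unset Strict Implicit. Unset Printing Implicit Defensive.

Lemma card_bigcup_le (I T : finType) (A : {pred I}) (F : I -> {set T}) :
  #|\bigcup_(i in A) F i| <= \sum_(i in A) #|F i|.
Proof.
elim/big_rec2: _ => [|i s U _ le]; first by rewrite cards0.
by apply: leq_trans (leq_card_setU _ _) _; rewrite leq_add2l.
Qed.

Definition copies n (Fam : graph_family) (H : graph n) :=
  [set p : {set 'I_n} * graph n | is_subgraph H p &&
       [exists m : 'I_n.+1, exists G : graph m, Fam m G && iso_to p G]].

Lemma countE n Fam (H : graph n) : Defs.count Fam H = #|copies Fam H|.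
Proof. by []. Qed.

Lemma copies_mono n Fam (H1 H2 : graph n) : H1 \subset H2 ->
  copies Fam H1 \subset copies Fam H2.
Proof.
move=> sH; apply/subsetP => p; rewrite !inE /is_subgraph => /andP[/andP[s1 s2] ->].
by rewrite (subset_trans s1 sH) s2.
Qed.

Lemma copies_nil n Fam (H1 H2 : graph n) p : p \in copies Fam H1 -> p.2 = set0 ->
  p \in copies Fam H2.
Proof.
rewrite !inE => /andP[/andP[s1 s2] ->] e0; rewrite andbT /is_subgraph e0 sub0set /=.
by apply/forallP => x; rewrite in_set0.
Qed.

Lemma upper n Fam k e0 e : is_ex n Fam e0 -> is_exa n Fam k e -> e <= e0 + k.
Proof.
case=> [[H0 sH0 [c0 _]] ex2] [[H sH [cH eH]] _].
set C := copies Fam H.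
pose D := \bigcup_(p in C) (if [pick x in p.2] is Some x then [set x] else set0).
have cD : #|D| <= k.
  apply: leq_trans (card_bigcup_le _ _) _.
  rewrite -cH countE -sum1_card; apply: leq_sum => p _.
  by case: pickP => [x _|_]; rewrite ?cards1 ?cards0.
pose H' := H :\: D.
have sH' : simple_graph H'.
  apply/forallP => x; apply/implyP; rewrite inE => /andP[_ xH].
  by move/forallP: sH => /(_ x) /implyP; apply.
have c' : Defs.count Fam H' = 0.
  rewrite countE; apply/eqP; rewrite cards_eq0; apply/eqP/setP => p.
  rewrite in_set0; apply/negbTE/negP => pC'.
  have pC : p \in C by apply: (subsetP (copies_mono Fam (subsetDl H D))).
  have := bigcup_sup p pC (F := fun p : {set 'I_n} * graph n => if [pick x in p.2] is Some x then [set x] else set0).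
  rewrite -/D; case: pickP => [x xp | none] sub.
  - have xD : x \in D by apply: (subsetP sub); rewrite set11.
    move: pC'; rewrite inE => /andP[/andP[s1 _] _].
    by move: (subsetP s1 x xp); rewrite inE xD.
  - have p2 : p.2 = set0 by apply/setP => y; rewrite in_set0; exact: none.
    have := copies_nil H0 pC p2.
    by move: c0; rewrite countE => /eqP; rewrite cards_eq0 => /eqP ->; rewrite in_set0.
have := ex2 H' sH' c'.
have := cardsID D H; rewrite -/H' => hc.
have : #|H :&: D| <= #|D| by apply: subset_leq_card; apply: subsetIr.
lia.
Qed.
Lemma small_set n (d : 'I_n -> nat) s : s <= n ->
  exists S : {set 'I_n}, #|S| = s /\ n * \sum_(x in S) d x <= s * \sum_x d x.
Proof.
move=> sn.
suff H : forall j, j <= n -> exists S : {set 'I_n}, #|S| = n - j /\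
   n * \sum_(x in S) d x <= (n - j) * \sum_x d x.
  by have := H (n - s) (leq_subr _ _); rewrite subKn.
elim => [|j IH] jn.
  exists setT; rewrite cardsT card_ord subn0; split => //.
  by rewrite (eq_bigl xpredT) // => x; rewrite in_setT.
have [S [cS hS]] := IH (ltnW jn).
have : 0 < #|S| by rewrite cS; lia.
case/card_gt0P => x0 x0S.
case: (@arg_maxnP _ x0 (mem S) d x0S) => x xS maxx.
exists (S :\ x); split.
  by have := cardsD1 x S; rewrite (_ : x \in S) // cS; lia.
have e1 : \sum_(y in S) d y = d x + \sum_(y in S :\ x) d y.
  rewrite (bigD1 x xS) /=; congr (_ + _); by apply: eq_bigl => y; rewrite in_setD1 andbC.
have e2 : \sum_(y in S) d y <= #|S| * d x.
  by rewrite -sum_nat_const; apply: leq_sum => z zS; exact: maxx.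
move: hS e2; rewrite e1 cS.
set a := \sum_(y in S :\ x) d y; set T := \sum_y d y; set t := n - j => h1 h2.
have tp : 0 < t by rewrite /t; lia.
have -> : n - j.+1 = t.-1 by rewrite /t; lia.
rewrite -(leq_pmul2l tp).
have h3 : t * a <= t.-1 * (d x + a) by nia.
apply: (@leq_trans (n * (t.-1 * (d x + a)))); first by rewrite mulnCA leq_mul2l h3 orbT.
rewrite mulnCA [t * _]mulnCA leq_mul2l h1 orbT //.
Qed.
Definition gf n k v (g : 'I_k * 'I_v -> 'I_n) i : {ffun 'I_v -> 'I_n} :=
  [ffun a => g (i, a)].
Definition blk n k v (g : 'I_k * 'I_v -> 'I_n) i : {set 'I_n} := gf g i @: setT.
Definition FE n k v (g : 'I_k * 'I_v -> 'I_n) (F : graph v) i : graph n :=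
  [set gf g i @: e | e : {set 'I_v} in F].
Definition Hnew n k v (H0 : graph n) (g : 'I_k * 'I_v -> 'I_n) (F : graph v) : graph n :=
  [set e in H0 | e :&: (g @: setT) == set0] :|: \bigcup_(i : 'I_k) FE g F i.

Lemma gf_inj n k v (g : 'I_k * 'I_v -> 'I_n) i : injective g -> injective (gf g i).
Proof. by move=> gi a b; rewrite !ffunE => /gi [] . Qed.

Lemma blk_uniq n k v (g : 'I_k * 'I_v -> 'I_n) i j x : injective g ->
  x \in blk g i -> x \in blk g j -> i = j.
Proof.
move=> gi /imsetP[a _ ->] /imsetP[b _]; rewrite !ffunE => /gi; by case.
Qed.

Lemma blk_S n k v (g : 'I_k * 'I_v -> 'I_n) i : blk g i \subset g @: setT.
Proof.
by apply/subsetP => x /imsetP[a _ ->]; rewrite ffunE; apply: imset_f; rewrite inE.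
Qed.

Lemma FE_sub n k v (g : 'I_k * 'I_v -> 'I_n) F i e : e \in FE g F i -> e \subset blk g i.
Proof. by case/imsetP => e' _ ->; apply: imsetS; apply: subsetT. Qed.

Lemma FE_ne n k v (g : 'I_k * 'I_v -> 'I_n) (F : graph v) i e : simple_graph F ->
  e \in FE g F i -> exists2 x, x \in e & x \in blk g i.
Proof.
move=> sF eF; case/imsetP: (eF) => e' e'F ee.
have : 0 < #|e'| by move/forallP: sF => /(_ e') /implyP /(_ e'F) /eqP ->.
case/card_gt0P => a ae; exists (gf g i a); first by rewrite ee imset_f.
by rewrite imset_f.
Qed.

Lemma Hnew_blk n k v (H0 : graph n) (g : 'I_k * 'I_v -> 'I_n) F i e x :
  injective g -> e \in Hnew H0 g F -> x \in e -> x \in blk g i ->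
  e \in FE g F i.
Proof.
move=> gi; rewrite /Hnew inE => /orP[h|/bigcupP[j _ ej]] xe xb.
  move: h; rewrite inE => /andP[_ /eqP e0].
  have : x \in e :&: (g @: setT) by rewrite inE xe (subsetP (blk_S g i)).
  by rewrite e0 inE.
by have := blk_uniq gi xb (subsetP (FE_sub ej) x xe) => ->.
Qed.

Lemma path_closed (T : finType) (r : rel T) (Q : pred T) x y :
  (forall a b, r a b -> Q a -> Q b) -> connect r x y -> Q x -> Q y.
Proof.
move=> cl /connectP[s pth ->]; elim: s x pth => //= z s IH x /andP[rxz pth] Qx.
exact: IH pth (cl _ _ rxz Qx).
Qed.

Lemma key n (Fam : graph_family) v k (H0 : graph n) (g : 'I_k * 'I_v -> 'I_n) (F : graph v)
  (Hmem : forall m (G : graph m), Fam m G -> simple_graph G && connected G)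
  (Hv_min : forall m (G : graph m), Fam m G -> v <= m)
  (Fmin : forall G : graph v, Fam v G -> #|F| <= #|G|)
  (sF : simple_graph F) (gi : injective g) (c0 : copies Fam H0 = set0) p :
  p \in copies Fam (Hnew H0 g F) -> exists i, p = (blk g i, FE g F i).
Proof.
case: p => P E; rewrite inE => /andP[/andP[sE /forallP sP] /existsP[m /existsP[G /andP[FG /existsP[f /and3P[/injectiveP fi /eqP fP /eqP fE]]]]]].
simpl in *.
have /andP[sG /andP[m0 /forallP cG]] := Hmem _ _ FG.
case: (boolP [exists a, f a \in g @: setT]) => [/existsP[a0 fa0] | none].
- case/imsetP: fa0 => [[i b0] _ fab].
  have fa0b : f a0 \in blk g i by rewrite fab; apply/imsetP; exists b0; rewrite ?inE // ffunE.
  have allb : forall b, f b \in blk g i.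
    move=> b; apply: (path_closed (Q := fun x => f x \in blk g i) _ (forallP (cG a0) b)) => // x y xy fx.
    have eE : f @: [set x; y] \in E by rewrite fE; apply: imset_f.
    have eH : f @: [set x; y] \in Hnew H0 g F := subsetP sE _ eE.
    have := Hnew_blk (i:=i) gi eH (imset_f f (set21 x y)) fx.
    move/FE_sub/subsetP; apply; exact: imset_f (set22 x y).
  have PB : P \subset blk g i.
    by rewrite -fP; apply/subsetP => z /imsetP[b _ ->]; exact: allb b.
  have cP : #|P| = m by rewrite -fP card_imset // cardsT card_ord.
  have cB : #|blk g i| = v by rewrite card_imset ?cardsT ?card_ord //; exact: gf_inj.
  have vm := Hv_min _ _ FG.
  have PeqB : P = blk g i by apply/eqP; rewrite eqEcard PB cP cB vm.
  have mv : (m : nat) = v by have := subset_leq_card PB; rewrite cP cB; lia.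
  have EF : E \subset FE g F i.
    apply/subsetP => e eE; have := eE; rewrite fE => /imsetP[e' e'G ee].
    have : 0 < #|e'| by move/forallP: sG => /(_ e') /implyP /(_ e'G) /eqP ->.
    case/card_gt0P => a ae.
    apply: (Hnew_blk (i:=i) gi (subsetP sE _ eE) _ (allb a)); rewrite ee; exact: imset_f.
  have cE : #|E| = #|G| by rewrite fE card_imset //; exact: imset_inj.
  have cF : #|FE g F i| = #|F| by rewrite card_imset //; apply: imset_inj; exact: gf_inj.
  have le : forall G' : graph m, Fam m G' -> #|F| <= #|G'|.
    by rewrite mv; exact: Fmin.
  have := le G FG => le'.
  by exists i; rewrite PeqB; congr pair; apply/eqP; rewrite eqEcard EF cF cE le'.
- exfalso.
  have pC : (P, E) \in copies Fam H0.
    rewrite inE /is_subgraph /=; apply/andP; split; first (apply/andP; split).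
    + apply/subsetP => e eE; have eH := subsetP sE _ eE.
      move: eH; rewrite /Hnew inE => /orP[|/bigcupP[j _ ej]]; first by rewrite inE => /andP[].
      case: (FE_ne sF ej) => x xe xb.
      have : x \in P := subsetP (implyP (sP e) eE) x xe.
      rewrite -fP => /imsetP[b _ xb'].
      by move/existsPn: none => /(_ b); rewrite -xb' (subsetP (blk_S g j) _ xb).
    + by apply/forallP.
    + apply/existsP; exists m; apply/existsP; exists G; rewrite FG; apply/existsP; exists f.
      by apply/and3P; split; [apply/injectiveP | rewrite fP | rewrite fE].
  by rewrite c0 in_set0 in pC.
Qed.

Lemma blk_in n (Fam : graph_family) v k (H0 : graph n) (g : 'I_k * 'I_v -> 'I_n) (F : graph v)
  (FamF : Fam v F) (gi : injective g) (vn : v <= n) i :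
  (blk g i, FE g F i) \in copies Fam (Hnew H0 g F).
Proof.
rewrite inE /is_subgraph /=; apply/andP; split; first (apply/andP; split).
- apply/subsetP => e eF; rewrite /Hnew inE; apply/orP; right; apply/bigcupP; exists i => //.
- by apply/forallP => e; apply/implyP; exact: FE_sub.
have vn' : v < n.+1 by rewrite ltnS.
apply/existsP; exists (Ordinal vn'); apply/existsP; exists F; rewrite FamF /=.
apply/existsP; exists (gf g i); rewrite /blk eqxx /FE eqxx !andbT.
by apply/injectiveP; exact: gf_inj.
Qed.

Lemma enum_inj (X : finType) n (S : {set 'I_n}) : #|X| = #|S| ->
  exists g : X -> 'I_n, injective g /\ g @: setT = S.
Proof.
move=> E; pose g x := enum_val (A := mem S) (cast_ord E (enum_rank x)).
have gi : injective g by move=> x y /enum_val_inj /cast_ord_inj /enum_rank_inj.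
exists g; split => //; apply/eqP; rewrite eqEcard card_imset // cardsT E leqnn andbT.
by apply/subsetP => _ /imsetP[x _ ->]; exact: enum_valP.
Qed.

Lemma deg_sum n (H : graph n) : simple_graph H ->
  \sum_x #|[set e in H | x \in e]| = 2 * #|H|.
Proof.
move=> sH.
transitivity (\sum_x \sum_(e in H) ((x \in e) : nat)).
  apply: eq_bigr => x _; rewrite -sum1_card big_mkcond /= [RHS]big_mkcond /=.
  by apply: eq_bigr => e _; rewrite inE; case: (e \in H); case: (x \in e).
rewrite exchange_big /= (eq_bigr (fun _ => 2)) ?sum_nat_const 1?mulnC // => e eH.
move/forallP: sH => /(_ e) /implyP /(_ eH) /eqP <-.
rewrite -sum1_card [RHS]big_mkcond /=; apply: eq_bigr => x _.
by case: (x \in e).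
Qed.

Lemma rat_part (n k v e0 e : nat) : 0 < n -> n * e0 <= n * e + 2 * k * v * e0 ->
  ((1 - (2 * k * v)%:R / n%:R) * e0%:R <= e%:R :> rat)%R.
Proof.
move=> n0 h.
have nR : ((0 : rat) < n%:R)%R by rewrite ltr0n.
rewrite -(ler_pM2r nR).
have -> : ((1 - (2 * k * v)%:R / n%:R) * e0%:R * n%:R = (n * e0)%N%:R - (2 * k * v * e0)%N%:R :> rat)%R.
  rewrite !natrM; field; by rewrite lt0r_neq0.
rewrite lerBlDr -natrM -natrD ler_nat; lia.
Qed.

Lemma Hnew_facts n (Fam : graph_family) v k (H0 : graph n) (g : 'I_k * 'I_v -> 'I_n) (F : graph v)
  (Hmem : forall m (G : graph m), Fam m G -> simple_graph G && connected G)
  (Hv_min : forall m (G : graph m), Fam m G -> v <= m)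
  (FamF : Fam v F) (Fmin : forall G : graph v, Fam v G -> #|F| <= #|G|)
  (sF : simple_graph F) (gi : injective g) (c0 : copies Fam H0 = set0)
  (sH0 : simple_graph H0) (v0 : 0 < v) (kvn : k * v <= n) :
  [/\ Defs.count Fam (Hnew H0 g F) = k, simple_graph (Hnew H0 g F) &
      #|H0| <= #|Hnew H0 g F| + \sum_(x in g @: setT) #|[set e in H0 | x \in e]|].
Proof.
split.
- rewrite countE.
  have -> : copies Fam (Hnew H0 g F) = [set (blk g i, FE g F i) | i : 'I_k].
    apply/setP => p; apply/idP/idP.
      by case/(key Hmem Hv_min Fmin sF gi c0) => i ->; apply: imset_f.
    case/imsetP => i _ ->; apply: blk_in => //.
    have : 0 < k by case: i => /= i; lia.
    nia.
  rewrite card_imset ?cardsT ?card_ord // => i j [e _].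
  pose a := Ordinal v0.
  apply: (blk_uniq (x := gf g i a) gi); last rewrite -e; by apply: imset_f; rewrite inE.
- apply/forallP => e; apply/implyP; rewrite /Hnew inE => /orP[|/bigcupP[j _ /imsetP[e' e'F ->]]].
    by rewrite inE => /andP[eH _]; move/forallP: sH0 => /(_ e) /implyP; apply.
  rewrite card_imset; last exact: gf_inj.
  by move/forallP: sF => /(_ e') /implyP; apply.
- set S := g @: setT.
  have h1 : H0 \subset [set e in H0 | e :&: S == set0] :|: [set e in H0 | e :&: S != set0].
    by apply/subsetP => e eH; rewrite !inE eH; case: (_ == _).
  apply: leq_trans (subset_leq_card h1) _.
  apply: leq_trans (leq_card_setU _ _) _.
  apply: leq_add.
    by apply: subset_leq_card; rewrite /Hnew subsetUl.
  apply: leq_trans (card_bigcup_le (mem S) (fun x => [set e in H0 | x \in e])).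
  apply: subset_leq_card; apply/subsetP => e; rewrite inE => /andP[eH /set0Pn[x]].
  rewrite inE => /andP[xe xS]; apply/bigcupP; exists x => //; by rewrite inE eH xe.
Qed.

Lemma lower_nat n (Fam : graph_family) v k e0 e
  (Hmem : forall m (G : graph m), Fam m G -> simple_graph G && connected G)
  (Hv_ex : exists G : graph v, Fam v G)
  (Hv_min : forall m (G : graph m), Fam m G -> v <= m)
  (Hex : is_ex n Fam e0) (Hexa : is_exa n Fam k e) :
  n * e0 <= n * e + 2 * k * v * e0.
Proof.
case: (leqP (k * v) n) => kvn; last by nia.
case: Hex => [[H0 sH0 [c0 eH0]] _]; case: Hexa => _ exa2.
have [F [FF Fmin]] : exists F : graph v, Fam v F /\ forall G, Fam v G -> #|F| <= #|G|.
  case: Hv_ex => G0 FG0; case: (arg_minnP (fun G : graph v => #|G|) FG0) => F FF Fmin.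
  by exists F.
have /andP[sF /andP[v0 _]] := Hmem _ _ FF.
have [S [cS hS]] := small_set (fun x => #|[set e in H0 | x \in e]|) kvn.
rewrite deg_sum // in hS.
have cX : #|{: 'I_k * 'I_v}| = #|S| by rewrite card_prod !card_ord cS.
have [g [gi gS]] := enum_inj cX.
have c0' : copies Fam H0 = set0 by apply/eqP; rewrite -cards_eq0 -countE c0.
have [cnt sN bd] := Hnew_facts Hmem Hv_min FF Fmin sF gi c0' sH0 v0 kvn.
have := exa2 _ sN cnt.
rewrite gS eH0 in bd.
move: hS bd; rewrite eH0.
set a := #|Hnew H0 g F|; set b := \sum_(x in S) _ => hS bd ha.
nia.
Qed.

Theorem proposition2p1 (Fam : graph_family) (v : nat)
  (Hmem : forall m (G : graph m), Fam m G -> simple_graph G && connected G)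
  (Hv_ex : exists G : graph v, Fam v G)
  (Hv_min : forall m (G : graph m), Fam m G -> v <= m)
  (n k e0 e : nat) (Hn : 0 < n)
  (Hex : is_ex n Fam e0) (Hexa : is_exa n Fam k e) :
  ((1 - (2 * k * v)%:R / n%:R) * e0%:R <= e%:R :> rat)%R /\ e <= e0 + k.
Proof.
split; last exact: upper Hex Hexa.
apply: rat_part Hn _.
exact: lower_nat Hmem Hv_ex Hv_min Hex Hexa.
Qed.
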